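(* Let $L$ be an $n\times n$ nonsingular M-matrix with integer entries, and let $\phi_1,\dots,\phi_n:\mathbb{R}\to\mathbb{R}$ be non-negative strictly increasing functions. Define $E_\phi(q)=\sum_{i=1}^n\phi_i((L^{-1}q)_i)$ for $q\in\mathbb{Z}^n$. For every $f\in\mathbb{Z}^n$ with $f\ge0$, the problem $\min_{g\sim f,\ g\ge0}E_\phi(g)$ (over $g\in\mathbb{Z}^n$) has a unique solution.
   Context: A Z-matrix is a square real matrix whose off-diagonal entries are all $\le 0$. A nonsingular M-matrix is a Z-matrix $L$ that is invertible with $L^{-1}$ having all entries nonnegative. Vector inequalities are entrywise. For $f,g\in\mathbb{Z}^n$, $f\sim g$ means $g-f=Lz$ for some $z\in\mathbb{Z}^n$. *)

(* Defs.v *)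
From HB Require Import structures.
From mathcomp Require Import all_boot all_order all_algebra.
Set Implicit Arguments. Unset Strict Implicit. Unset Printing Implicit Defensive.
Import Order.TTheory GRing.Theory Num.Theory.
Local Open Scope ring_scope.

Definition Zmatrix (R : numDomainType) (n : nat) (L : 'M[R]_n) : Prop :=
  forall i j : 'I_n, i != j -> L i j <= 0.

Definition nonsingular_Mmatrix (R : numFieldType) (n : nat) (L : 'M[R]_n) : Prop :=
  [/\ Zmatrix L, L \in unitmx & forall i j : 'I_n, 0 <= invmx L i j].

Definition mx_intr (R : numFieldType) (m n : nat) (A : 'M[int]_(m, n)) : 'M[R]_(m, n) :=
  map_mx (fun z : int => z%:~R) A.

Definition lat_equiv (n : nat) (L : 'M[int]_n) (f g : 'cV[int]_n) : Prop :=
  exists z : 'cV[int]_n, g - f = L *m z.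

Definition vnonneg (n : nat) (g : 'cV[int]_n) : Prop :=
  forall i : 'I_n, 0 <= g i 0.

Definition Ephi (R : numFieldType) (n : nat) (L : 'M[int]_n)
  (phi : 'I_n -> R -> R) (q : 'cV[int]_n) : R :=
  \sum_(i < n) phi i ((invmx (mx_intr R L) *m mx_intr R q) i 0).

(* Main.v *)
Require Import Defs.
From HB Require Import structures.
From mathcomp Require Import all_boot all_order all_algebra.
From mathcomp Require Import zify.
From Stdlib Require Import Classical.
Import Order.TTheory GRing.Theory Num.Theory.
Local Open Scope ring_scope.

Lemma mxiE (R : numFieldType) m n (A : 'M[int]_(m, n)) :
  mx_intr R A = map_mx (intmul (1:R)) A.
Proof. by []. Qed.

Lemma mxi_lin (R : numFieldType) n (L : 'M[int]_n) (v w : 'cV[int]_n) :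
  mx_intr R (v + L *m w) = mx_intr R v + mx_intr R L *m mx_intr R w.
Proof. by rewrite !mxiE map_mxD map_mxM. Qed.

Lemma X_shift (R : numFieldType) n (L : 'M[int]_n) (f z : 'cV[int]_n) :
  mx_intr R L \in unitmx ->
  invmx (mx_intr R L) *m mx_intr R (f + L *m z) =
  invmx (mx_intr R L) *m mx_intr R f + mx_intr R z.
Proof.
move=> hU; by rewrite mxi_lin mulmxDr mulmxA mulVmx // mul1mx.
Qed.

Lemma X_nonneg (R : numFieldType) n (M : 'M[R]_n) (v : 'cV[int]_n) :
  (forall i j, 0 <= M i j) -> vnonneg v ->
  forall i, 0 <= (M *m mx_intr R v) i 0.
Proof.
move=> hM hv i; rewrite mxE; apply: sumr_ge0 => j _.
by rewrite mulr_ge0 // mxE ler0z.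
Qed.

Lemma min_closed n (L : 'M[int]_n) (f z m : 'cV[int]_n) (i : 'I_n) :
  (forall i j : 'I_n, i != j -> L i j <= 0) ->
  (forall j, m j 0 <= z j 0) -> m i 0 = z i 0 ->
  0 <= (f + L *m z) i 0 -> 0 <= (f + L *m m) i 0.
Proof.
move=> hZ hmz hmi; rewrite !mxE => h; apply: (le_trans h).
rewrite lerD2l; apply: ler_sum => j _.
case: (eqVneq i j) => [<-|hij]; first by rewrite hmi.
by apply: ler_wnM2l; [exact: hZ|exact: hmz].
Qed.

Lemma sub_canc (a b e : int) : a + e - (b + e) = a - b.
Proof. lia. Qed.

Lemma least_elt n (L : 'M[int]_n) (f : 'cV[int]_n) (c : 'I_n -> int) :
  (forall i j : 'I_n, i != j -> L i j <= 0) ->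
  (forall z : 'cV[int]_n, vnonneg (f + L *m z) -> forall i, - c i <= z i 0) ->
  vnonneg f ->
  exists z0, vnonneg (f + L *m z0) /\
    forall y, vnonneg (f + L *m y) -> forall i, z0 i 0 <= y i 0.
Proof.
move=> hZ hc hf.
pose mu (z : 'cV[int]_n) := \sum_i (z i 0 + c i).
have mu_ge0 z : vnonneg (f + L *m z) -> 0 <= mu z.
  move=> hz; apply: sumr_ge0 => i _; have := hc z hz i; lia.
suff: forall k : nat, forall z, vnonneg (f + L *m z) -> (absz (mu z) < k)%N ->
  exists z0, vnonneg (f + L *m z0) /\
    forall y, vnonneg (f + L *m y) -> forall i, z0 i 0 <= y i 0.
  move=> H; apply: (H (absz (mu 0)).+1 0) => //.
  by move=> i; rewrite mulmx0 addr0.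
elim=> [//|k IH] z hz hk.
case: (classic (forall y, vnonneg (f + L *m y) -> forall i, z i 0 <= y i 0)).
  by move=> H; exists z.
move/not_all_ex_not => [y /not_all_ex_not [hy /not_all_ex_not [i hi]]].
pose m := \col_j (Order.min (z j 0) (y j 0)).
have hm : vnonneg (f + L *m m).
  move=> j; case: (leP (z j 0) (y j 0)) => hzy.
  - apply: (@min_closed _ L f z m j hZ _ _ (hz j)) => [l|]; rewrite !mxE ?ge_min ?lexx //.
    by rewrite min_l.
  - apply: (@min_closed _ L f y m j hZ _ _ (hy j)) => [l|]; rewrite !mxE ?ge_min ?lexx ?orbT //.
    by rewrite min_r // ltW.
have hlt : mu m < mu z.
  rewrite -subr_gt0 /mu -sumrB (bigD1 i) //=.
  have hyz : y i 0 < z i 0 by rewrite ltNge; apply/negP.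
  rewrite -[0]addr0; apply: ltr_leD.
    by rewrite !mxE min_r ?ltW // sub_canc subr_gt0.
  by apply: sumr_ge0 => j _; rewrite !mxE sub_canc subr_ge0 ge_min lexx.
apply: (IH m hm).
have := mu_ge0 _ hm; have := mu_ge0 _ hz; move: hk hlt; lia.
Qed.

Lemma lower_bound (R : realFieldType) n (L : 'M[int]_n) (f : 'cV[int]_n) :
  mx_intr R L \in unitmx -> (forall i j, 0 <= invmx (mx_intr R L) i j) ->
  exists c : 'I_n -> int,
    forall z, vnonneg (f + L *m z) -> forall i, - c i <= z i 0.
Proof.
move=> hU hM.
exists (fun i => `|(\adj L *m f) i 0|) => z hz i.
have h1 := @X_nonneg R n _ _ hM hz i.
rewrite (@X_shift R n L f z hU) mxE in h1.
have hD : (\det L)%:~R != 0 :> R.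
  move: hU; rewrite unitmxE unitfE mxiE det_map_mx //.
have h2 : (invmx (mx_intr R L) *m mx_intr R f) i 0 <= (`|(\adj L *m f) i 0|)%:~R.
  rewrite /invmx hU -scalemxAl mxE !mxiE -map_mx_adj -map_mxM mxE det_map_mx /=.
  apply: le_trans (ler_norm _) _.
  rewrite normrM normfV mulrC ler_pdivrMr ?normr_gt0 // intr_norm.
  apply: ler_peMr => //.
  rewrite -intr_norm ler1z; move: hD; rewrite intr_eq0; lia.
move: h1; rewrite [mx_intr R z i 0]mxE -(ler_int R) mulrNz.
move: h2; set a := (X in X <= _); set b := (X in _ <= X) => h2 h1.
apply: (le_trans (_ : _ <= - a)); first by rewrite lerN2.
by rewrite -subr_ge0 opprK addrC.
Qed.

Lemma lat_inv n (L : 'M[int]_n) (f h : 'cV[int]_n) :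
  lat_equiv L f h -> exists z, h = f + L *m z.
Proof. by move=> [z hz]; exists z; rewrite -hz addrC subrK. Qed.

Theorem mainTheorem14 (R : realFieldType) (n : nat) (L : 'M[int]_n)
  (phi : 'I_n -> R -> R)
  (hL : nonsingular_Mmatrix (mx_intr R L))
  (hphi_nonneg : forall (i : 'I_n) (x : R), 0 <= phi i x)
  (hphi_incr : forall (i : 'I_n) (x y : R), x < y -> phi i x < phi i y)
  (f : 'cV[int]_n) (hf : vnonneg f) :
  exists! g : 'cV[int]_n,
    (lat_equiv L f g /\ vnonneg g) /\
    (forall h : 'cV[int]_n, lat_equiv L f h -> vnonneg h ->
       Ephi L phi g <= Ephi L phi h).
Proof.
case: hL => hZR hU hM.
have hZ : forall i j : 'I_n, i != j -> L i j <= 0.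
  by move=> i j hij; have := hZR i j hij; rewrite mxE lerz0.
have [c hc] := @lower_bound R n L f hU hM.
have [z0 [hz0 hleast]] := @least_elt n L f c hZ hc hf.
have hmono : forall i x y, x <= y -> phi i x <= phi i y.
  by move=> i x y; rewrite le_eqVlt => /orP [/eqP ->|/hphi_incr /ltW].
have hE : forall z, Ephi L phi (f + L *m z) =
   \sum_i phi i ((invmx (mx_intr R L) *m mx_intr R f) i 0 + (z i 0)%:~R).
  move=> z; rewrite /Ephi; apply: eq_bigr => i _.
  by rewrite (@X_shift R n L f z hU) [in LHS]mxE [mx_intr R z i 0]mxE.
have hmin : forall h, lat_equiv L f h -> vnonneg h ->
    Ephi L phi (f + L *m z0) <= Ephi L phi h.
  move=> h /lat_inv [z ->] hh; rewrite !hE; apply: ler_sum => i _.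
  by apply: hmono; rewrite lerD2l ler_int; apply: hleast.
exists (f + L *m z0); split.
  split=> //; split=> //; exists z0; by rewrite addrC addKr.
move=> g' [[/lat_inv [z' ->] hg'] hming'].
have hle := hming' _ (ex_intro _ z0 (etrans (addrC _ _) (addKr _ _))) hz0.
have hzz : forall i, z0 i 0 <= z' i 0 by apply: hleast.
suff -> : z' = z0 by [].
apply/matrixP => i j; rewrite (ord1 j).
apply/eqP; rewrite eq_le hzz andbT.
rewrite leNgt; apply/negP => hlt.
move: hle; rewrite !hE (bigD1 i) //= [X in _ <= X](bigD1 i) //=.
apply/negP; rewrite -ltNge; apply: ltr_leD.
  by apply: hphi_incr; rewrite ltrD2l ltr_int.
apply: ler_sum => k _; apply: hmono; rewrite lerD2l ler_int; exact: hzz.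
Qed.
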